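(* Let $n$ be even and $F\colon\mathbb F_2^n\to\mathbb F_2^n$ a quadratic function that is CCZ-equivalent to a permutation. Then $|N_F|\ge 3\cdot(2^{n/2}-1)$ and $N_F$ is a $3$-fold blocking set of $\mathrm{PG}(n-1,2)$ with respect to $(n/2)$-spaces, i.e. every subspace $U\le\mathbb F_2^n$ with $\dim U=\frac n2+1$ satisfies $|U\cap N_F|\ge3$.
   Context: $\langle\cdot,\cdot\rangle$ is the standard dot product; $F_b(x)=\langle b,F(x)\rangle$. $F$ is quadratic if each $F_b$ is a quadratic form plus an affine function. $F_b$ is bent if $|\sum_x(-1)^{F_b(x)+\langle x,a\rangle}|=2^{n/2}$ for all $a$. $N_F=\{b\in\mathbb F_2^n\setminus\{0\}\colon F_b\text{ not bent}\}$. Two functions $F,G\colon\mathbb F_2^n\to\mathbb F_2^n$ are CCZ-equivalent if some affine permutation of $\mathbb F_2^{2n}$ maps the graph $\{(x,F(x))\}$ onto the graph $\{(x,G(x))\}$. $\mathrm{PG}(n-1,2)$ is identified with $\mathbb F_2^n\setminus\{0\}$; an $(n/2)$-space is $U\setminus\{0\}$ for a subspace $U$ of dimension $n/2+1$. *)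

(* Defs.v *)
From HB Require Import structures.
From mathcomp Require Import all_boot all_order all_algebra.
Set Implicit Arguments.
Unset Strict Implicit.
Unset Printing Implicit Defensive.
Import GRing.Theory Num.Theory.
Local Open Scope ring_scope.

Notation vec n := 'rV['F_2]_n.

Definition dot n (x y : vec n) : 'F_2 := \sum_(i < n) x 0 i * y 0 i.

Definition comp_fun n (F : vec n -> vec n) (b : vec n) : vec n -> 'F_2 :=
  fun x => dot b (F x).

Definition quadratic_fun n (f : vec n -> 'F_2) : Prop :=
  exists (A : 'M['F_2]_n) (c : vec n) (d : 'F_2),
    forall x, f x = \sum_(i < n) \sum_(j < n) A i j * x 0 i * x 0 j + dot c x + d.

Definition quadratic n (F : vec n -> vec n) : Prop :=
  forall b, quadratic_fun (comp_fun F b).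

Definition walsh n (f : vec n -> 'F_2) (a : vec n) : int :=
  \sum_(x : vec n) (-1) ^+ (nat_of_ord (f x + dot x a)).

Definition bent n (f : vec n -> 'F_2) : bool :=
  [forall a : vec n, `|walsh f a| == (2 ^ n./2)%:Z].

Definition NF n (F : vec n -> vec n) : {set vec n} :=
  [set b : vec n | (b != 0) && ~~ bent (comp_fun F b)].

Definition graph n (F : vec n -> vec n) : {set 'rV['F_2]_(n + n)} :=
  [set row_mx x (F x) | x : vec n].

Definition CCZ_equiv n (F G : vec n -> vec n) : Prop :=
  exists (M : 'M['F_2]_(n + n)) (v : 'rV['F_2]_(n + n)),
    M \in unitmx /\ [set z *m M + v | z in graph F] = graph G.

(* Main.v *)
Require Import Defs.
From HB Require Import structures.
From mathcomp Require Import all_boot all_order all_algebra all_field.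
From mathcomp Require Import zify ring.
Import GRing.Theory Num.Theory.
Set Implicit Arguments.
Unset Strict Implicit.
Unset Printing Implicit Defensive.
Local Open Scope ring_scope.

Definition sg (t : 'F_2) : int := (-1) ^+ (nat_of_ord t).

Lemma F2cases (t : 'F_2) : t = 0 \/ t = 1.
Proof. case: t => [[|[|m]]] // H; [left|right]; exact: val_inj. Qed.

Lemma F2xx (t : 'F_2) : t + t = 0.
Proof. by case: (F2cases t) => ->; apply/eqP. Qed.

Lemma sgD s t : sg (s + t) = sg s * sg t.
Proof. by case: (F2cases s) => ->; case: (F2cases t) => ->; reflexivity. Qed.

Lemma sg0 : sg 0 = 1. Proof. by []. Qed.
Lemma sg1 : sg 1 = -1. Proof. by []. Qed.
Lemma sg_neq0 t : sg t != 0. Proof. by rewrite /sg signr_eq0. Qed.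
Lemma char_sum k (V : {vspace 'rV['F_2]_k}) (h : 'rV['F_2]_k -> 'F_2) :
  {in V &, forall x y, h (x + y) = h x + h y} ->
  \sum_(x in V) sg (h x) = if [forall x, (x \in V) ==> (h x == 0)] then (#|V|)%:Z else 0.
Proof.
move=> hadd; case: ifP => [/forallP H | /negbT/forallPn [e]].
  rewrite (eq_bigr (fun _ => 1)) => [|x xV]; last first.
    by move/implyP: (H x) => /(_ xV)/eqP ->.
  by rewrite sumr_const natz.
rewrite negb_imply => /andP [eV /eqP he0].
have he : h e = 1 by case: (F2cases (h e)) he0 => ->.
set S := \sum_(x in V) _.
have HS : S = - S.
  rewrite {1}/S (reindex_inj (addrI e)) /= -sumrN.
  apply: eq_big => x; first by rewrite rpredDl.
  move=> xV; have xV' : x \in V by rewrite -(rpredDl x eV).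
  by rewrite hadd // he sgD sg1 mulN1r.
have : S *+ 2 = 0 by rewrite mulr2n {2}HS subrr.
by move/eqP; rewrite mulrn_eq0 /= => /eqP.
Qed.

Section Dot.
Variable n : nat.
Implicit Types x y z w a b : 'rV['F_2]_n.

Lemma dotC x y : dot x y = dot y x.
Proof. by apply: eq_bigr => i _; rewrite mulrC. Qed.
Lemma dotDl x y z : dot (x + y) z = dot x z + dot y z.
Proof. by rewrite /dot -big_split; apply: eq_bigr => i _; rewrite mxE mulrDl. Qed.
Lemma dotDr x y z : dot z (x + y) = dot z x + dot z y.
Proof. by rewrite dotC dotDl !(dotC z). Qed.
Lemma dot0l x : dot 0 x = 0.
Proof. by rewrite /dot big1 // => i _; rewrite mxE mul0r. Qed.
Lemma dot0r x : dot x 0 = 0.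
Proof. by rewrite dotC dot0l. Qed.
Lemma dotE x y : dot x y = (x *m y^T) 0 0.
Proof. by rewrite mxE; apply: eq_bigr => i _; rewrite mxE. Qed.

Lemma dot_nondeg w : (forall x, dot x w = 0) -> w = 0.
Proof.
move=> H; apply/rowP => i; rewrite mxE.
have := H (delta_mx 0 i); rewrite /dot (bigD1 i) //= big1 => [|j ji].
  by rewrite addr0 mxE !eqxx mul1r.
by rewrite mxE (negbTE ji) andbF mul0r.
Qed.

Lemma card_vec : #|{: 'rV['F_2]_n}| = (2 ^ n)%N.
Proof. by rewrite card_mx card_Fp // mul1n. Qed.

Lemma sum_dot w : \sum_(x : 'rV['F_2]_n) sg (dot x w) = if w == 0 then (2 ^ n)%:Z else 0.
Proof.
have -> : \sum_(x : 'rV['F_2]_n) sg (dot x w) = \sum_(x in (fullv : {vspace 'rV['F_2]_n})) sg (dot x w).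
  by apply: eq_bigl => x; rewrite memvf.
rewrite char_sum; last by move=> x y _ _; rewrite dotDl.
case: eqP => [->|wn0].
  rewrite ifT; last by apply/forallP => x; rewrite dot0r eqxx implybT.
  by rewrite card_vspacef card_vec.
rewrite ifF //; apply/negP => /forallP H; apply: wn0; apply: dot_nondeg => x.
by apply/eqP; move: (H x); rewrite memvf.
Qed.
End Dot.

Lemma dot_mulmx m (u z : 'rV['F_2]_m) (M : 'M['F_2]_m) : dot u (z *m M) = dot (u *m M^T) z.
Proof. by rewrite !dotE trmx_mul mulmxA. Qed.

Lemma dot_row_mx m k (a x : 'rV['F_2]_m) (b y : 'rV['F_2]_k) :
  dot (row_mx a b) (row_mx x y) = dot a x + dot b y.
Proof.
rewrite /dot big_split_ord /=; congr (_ + _); apply: eq_bigr => i _.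
  by rewrite !row_mxEl.
by rewrite !row_mxEr.
Qed.

Definition WG n (F : 'rV['F_2]_n -> 'rV['F_2]_n) (u : 'rV['F_2]_(n + n)) : int :=
  \sum_(z in graph F) sg (dot u z).

Lemma WG_walsh n (F : 'rV['F_2]_n -> 'rV['F_2]_n) a b :
  WG F (row_mx a b) = walsh (comp_fun F b) a.
Proof.
rewrite /WG /graph big_imset /=; last by move=> x y _ _ /eq_row_mx [].
apply: eq_bigr => x _; rewrite dot_row_mx /comp_fun addrC (dotC a).
by [].
Qed.

Lemma WG_ccz n (F G : 'rV['F_2]_n -> 'rV['F_2]_n) (M : 'M['F_2]_(n + n)) v :
  M \in unitmx -> [set z *m M + v | z in graph F] = graph G ->
  forall u, WG G u = sg (dot u v) * WG F (u *m M^T).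
Proof.
move=> Mu E u; rewrite /WG -E big_imset /=; last first.
  by move=> z1 z2 _ _ /addIr /(can_inj (mulmxK Mu)).
rewrite mulr_sumr; apply: eq_bigr => z _.
by rewrite dotDr sgD dot_mulmx mulrC.
Qed.



Lemma WG_perm1 n (G : 'rV['F_2]_n -> 'rV['F_2]_n) a : a != 0 -> WG G (row_mx a 0) = 0.
Proof.
move=> an0; rewrite WG_walsh /walsh /comp_fun.
under eq_bigr => x _ do rewrite dot0l add0r.
by rewrite sum_dot (negbTE an0).
Qed.

Lemma WG_perm2 n (G : 'rV['F_2]_n -> 'rV['F_2]_n) b :
  bijective G -> b != 0 -> WG G (row_mx 0 b) = 0.
Proof.
move=> bG bn0; rewrite WG_walsh /walsh /comp_fun.
under eq_bigr => x _ do rewrite dot0r addr0 dotC.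
rewrite -(@reindex _ _ _ _ _ G predT (fun y => sg (dot y b))) ?sum_dot ?(negbTE bn0) //.
exact: onW_bij.
Qed.

Lemma nf_of_zero n (F : 'rV['F_2]_n -> 'rV['F_2]_n) b a :
  b != 0 -> walsh (comp_fun F b) a = 0 -> b \in NF F.
Proof.
move=> bn0 W0; rewrite inE bn0 /=; apply/negP => /forallP /(_ a).
by rewrite W0 normr0 eq_sym -[0]/(0%:Z) eqz_nat expn_eq0.
Qed.

Lemma ccz_P n (F : 'rV['F_2]_n -> 'rV['F_2]_n) :
  (exists G : 'rV['F_2]_n -> 'rV['F_2]_n, bijective G /\ CCZ_equiv F G) ->
  exists P1 P2 : {vspace 'rV['F_2]_n}, (P1 + P2)%VS = fullv /\
   (forall b, b \in P1 -> b != 0 -> b \in NF F) /\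
   (forall b, b \in P2 -> b != 0 -> b \in NF F).
Proof.
move=> [G [bG [M [v [Mu E]]]]].
set N := M^T.
pose X1 := rsubmx (row_mx 1%:M 0 *m N) : 'M_(n, n).
pose X2 := rsubmx (row_mx 0 1%:M *m N) : 'M_(n, n).
have H1 a : rsubmx (row_mx a 0 *m N) = a *m X1.
  by rewrite /X1 mulmx_rsub mulmxA mul_mx_row mulmx1 mulmx0.
have H2 a : rsubmx (row_mx 0 a *m N) = a *m X2.
  by rewrite /X2 mulmx_rsub mulmxA mul_mx_row mulmx1 mulmx0.
exists (limg (linfun (mulmxr X1))), (limg (linfun (mulmxr X2))).
split.
  apply/eqP; rewrite eqEsubv subvf /=; apply/subvP => y _.
  have Nu : N \in unitmx by rewrite unitmx_tr.
  set w := row_mx 0 y *m invmx N.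
  have wN : w *m N = row_mx 0 y by rewrite /w mulmxKV.
  have -> : y = lsubmx w *m X1 + rsubmx w *m X2.
    rewrite -H1 -H2 -linearD /= -mulmxDl add_row_mx addr0 add0r hsubmxK wN.
    by rewrite row_mxKr.
  apply: memv_add.
    by have := memv_img (linfun (mulmxr X1)) (memvf (lsubmx w)); rewrite lfunE.
  by have := memv_img (linfun (mulmxr X2)) (memvf (rsubmx w)); rewrite lfunE.
split.
  move=> b /memv_imgP [a _ ->]; rewrite lfunE /= => bn0.
  have an0 : a != 0 by apply: contraNneq bn0 => ->; rewrite mul0mx.
  apply: (@nf_of_zero _ _ _ (lsubmx (row_mx a 0 *m N))) => //.
  have := WG_ccz Mu E (row_mx a 0).
  rewrite WG_perm1 // -/N -{1}(hsubmxK (row_mx a 0 *m N)) H1 WG_walsh.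
  by move=> /esym/eqP; rewrite mulf_eq0 (negbTE (sg_neq0 _)) /= => /eqP.
move=> b /memv_imgP [a _ ->]; rewrite lfunE /= => bn0.
have an0 : a != 0 by apply: contraNneq bn0 => ->; rewrite mul0mx.
apply: (@nf_of_zero _ _ _ (lsubmx (row_mx 0 a *m N))) => //.
have := WG_ccz Mu E (row_mx 0 a).
rewrite WG_perm2 // -/N -{1}(hsubmxK (row_mx 0 a *m N)) H2 WG_walsh.
by move=> /esym/eqP; rewrite mulf_eq0 (negbTE (sg_neq0 _)) /= => /eqP.
Qed.

Lemma dimv_le n (V : {vspace 'rV['F_2]_n}) : (\dim V <= n)%N.
Proof. by have := dimvS (subvf V); rewrite dimvf /= /dim /= mul1n. Qed.

Lemma dimvf_vec n : \dim (fullv : {vspace 'rV['F_2]_n}) = n.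
Proof. by rewrite dimvf /dim /= mul1n. Qed.

Lemma even_half n : ~~ odd n -> n = (n./2 + n./2)%N.
Proof. by move=> ev; rewrite -{1}(odd_double_half n) (negbTE ev) add0n -addnn. Qed.

Lemma block3 n (B : {set 'rV['F_2]_n}) (P1 P2 U : {vspace 'rV['F_2]_n}) :
  ~~ odd n -> (P1 + P2)%VS = fullv ->
  (forall b, b \in P1 -> b != 0 -> b \in B) ->
  (forall b, b \in P2 -> b != 0 -> b \in B) ->
  \dim U = (n./2 + 1)%N -> odd #|[set b in B | b \in U]| ->
  (3 <= #|[set b in B | b \in U]|)%N.
Proof.
move=> ev sumP HP1 HP2 dU oddS.
set S := [set b in B | b \in U] in oddS *.
suff H2 : (2 <= #|S|)%N.
  by move: oddS H2; case: #|S| => [|[|[|k]]].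
rewrite leqNgt; apply/negP => HS.
have HS1 : (#|S| <= 1)%N by [].
pose p := odflt 0 [pick x in S].
have Sp : forall x, x \in S -> x = p.
  move=> x xS; rewrite /p; case: pickP => [y yS|/(_ x)] /=; last by rewrite xS.
  by move/card_le1_eqP: HS1 => /(_ x y xS yS).
have inl : forall P : {vspace 'rV['F_2]_n}, (forall b, b \in P -> b != 0 -> b \in B) ->
    (U :&: P <= <[p]>)%VS.
  move=> P HP; apply/subvP => u /memv_capP [uU uP].
  have [->|un0] := eqVneq u 0; first exact: mem0v.
  by rewrite (Sp u) ?memv_line // inE HP // uU.
have sD : (U :&: P1 + U :&: P2 <= <[p]>)%VS by rewrite subv_add !inl.
have := dimvS sD; rewrite dim_vline.
have e1 := dimv_sum_cap U P1; have e2 := dimv_sum_cap U P2.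
have e3 := dimv_sum_cap (U :&: P1) (U :&: P2).
have e5 := dimv_sum_cap P1 P2; rewrite sumP dimvf_vec in e5.
have sI : ((U :&: P1) :&: (U :&: P2) <= P1 :&: P2)%VS.
  by apply: capvS; apply: capvSr.
have e4 := dimvS sI.
have l1 := dimv_le (U + P1); have l2 := dimv_le (U + P2).
have hn := even_half ev.
move: (p != 0) => c.
case: c => /=; lia.
Qed.

Lemma cardU n (U : {vspace 'rV['F_2]_n}) : #|U| = (2 ^ \dim U)%N.
Proof. by rewrite card_vspace card_Fp. Qed.

Lemma sub_dim n (V : {vspace 'rV['F_2]_n}) k :
  (k <= \dim V)%N -> exists2 Z : {vspace 'rV['F_2]_n}, (Z <= V)%VS & \dim Z = k.
Proof.
move=> kV; exists <<take k (vbasis V)>>%VS.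
  by apply/span_subvP => x /mem_take; apply: vbasis_mem.
have fr : free (take k (vbasis V)).
  apply: (@catl_free _ _ (drop k (vbasis V))); rewrite cat_take_drop.
  exact: basis_free (vbasisP V).
by move/eqP: fr ->; rewrite size_takel // size_tuple.
Qed.

Lemma card_nz n (B : {set 'rV['F_2]_n}) (V P : {vspace 'rV['F_2]_n}) :
  (V <= P)%VS -> (forall b, b \in P -> b != 0 -> b \in B) -> 0 \notin B ->
  #|[set b in B | b \in V]| = (2 ^ \dim V - 1)%N.
Proof.
move=> VP HP B0.
have E : [set b in V] = 0 |: [set b in B | b \in V].
  apply/setP => x; rewrite !inE; have [->|xn0] := eqVneq x 0; first by rewrite mem0v.
  by rewrite /=; case xV: (x \in V); rewrite ?andbF // HP // (subvP VP).
have := cardsU1 0 [set b in B | b \in V]; rewrite -E cardsE cardU inE (negbTE B0) /=.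
by move=> ->; rewrite add1n subn1.
Qed.

Lemma coset2 n (B : {set 'rV['F_2]_n}) (P Z : {vspace 'rV['F_2]_n}) w :
  (Z <= P)%VS -> \dim Z = n./2 -> (0 < n./2)%N ->
  (forall b, b \in P -> b != 0 -> b \in B) -> 0 \notin B ->
  w \in B -> w \notin Z ->
  (forall U : {vspace 'rV['F_2]_n}, \dim U = (n./2 + 1)%N -> odd #|[set b in B | b \in U]|) ->
  (2 <= #|[set x in B | (x - w)%R \in Z]|)%N.
Proof.
move=> ZP dZ h0 HP B0 wB wZ Hpar.
have wn0 : w != 0 by apply: contraNneq wZ => ->; rewrite mem0v.
set Uw := (Z + <[w]>)%VS.
have capZ : (Z :&: <[w]> = 0)%VS.
  apply/eqP; rewrite -subv0; apply/subvP => x /memv_capP [xZ /vlineP [k kx]].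
  move: xZ; rewrite kx memv0; case: (F2cases k) => ->; first by rewrite scale0r.
  by rewrite scale1r (negbTE wZ).
have dU : \dim Uw = (n./2 + 1)%N by rewrite dimv_disjoint_sum // dim_vline wn0 dZ.
have memU x : (x \in Uw) = (x \in Z) || (x - w \in Z).
  apply/idP/idP.
    move/memv_addP => [z zZ [y /vlineP [k ->] ->]].
    case: (F2cases k) => ->; first by rewrite scale0r addr0 zZ.
    by rewrite scale1r addrK zZ orbT.
  case/orP => H; first by rewrite -[x]addr0; apply: memv_add H (mem0v _).
  by rewrite -[x](subrK w); apply: memv_add H (memv_line w).
have oddT := Hpar Uw dU.
set T := [set b in B | b \in Uw] in oddT.
have cI := cardID [pred x | x \in Z] T.
have E1 : #|[predI T & [pred x | x \in Z]]| = #|[set b in B | b \in Z]|.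
  apply: eq_card => x; rewrite !inE memU /=.
  case: (x \in B) => //=.
  apply/idP/idP => [/andP [_ H] | H]; first exact: H.
  by apply/andP; split; [apply/orP; left|]; exact: H.
have E2 : #|[predD T & [pred x | x \in Z]]| = #|[set x in B | x - w \in Z]|.
  apply: eq_card => x; rewrite !inE memU /=.
  case: (x \in B) => /=; last by rewrite andbF.
  apply/idP/idP => [HH | H].
    case/andP: HH => nH HH; case/orP: HH => H; last exact: H.
    by elim: (negP nH); exact: H.
  apply/andP; split; last by apply/orP; right; exact: H.
  apply/negP => xZ; apply: (negP wZ).
  by rewrite -[w]opprK -[- w](addKr x) opprD opprK; apply: memvB.
rewrite E1 E2 (card_nz (P := P)) // dZ in cI.
set s := #|[set x in B | x - w \in Z]| in cI *.
have s0 : (0 < s)%N.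
  by apply/card_gt0P; exists w; rewrite !inE wB subrr mem0v.
have o1 : odd (2 ^ n./2 - 1) by rewrite oddB ?expn_gt0 // oddX; case: (n./2) h0.
move: oddT; rewrite -cI oddD o1 /=.
by case: s s0 {cI} => [|[|k]].
Qed.

Lemma sum_ind (T : finType) (A : {pred T}) (S : pred T) :
  (\sum_(x in A) (S x : nat))%N = #|[predI A & S]|.
Proof.
rewrite -sum1_card [RHS]big_mkcond /= [LHS]big_mkcond /=; apply: eq_bigr => x _.
rewrite [x \in [predI A & S]]inE; case: (x \in A) => /=; last by []. by rewrite unfold_in; case: (S x).
Qed.

Lemma size_bound n (B : {set 'rV['F_2]_n}) (P1 P2 : {vspace 'rV['F_2]_n}) :
  ~~ odd n -> (P1 + P2)%VS = fullv ->
  (forall b, b \in P1 -> b != 0 -> b \in B) ->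
  (forall b, b \in P2 -> b != 0 -> b \in B) -> 0 \notin B ->
  (forall U : {vspace 'rV['F_2]_n}, \dim U = (n./2 + 1)%N -> odd #|[set b in B | b \in U]|) ->
  (3 * (2 ^ n./2 - 1) <= #|B|)%N.
Proof.
move=> ev sumP HP1 HP2 B0 Hpar.
have [h0|hpos] := posnP n./2; first by rewrite h0.
have hn := even_half ev.
wlog d1h : P1 P2 sumP HP1 HP2 / (n./2 <= \dim P1)%N.
  move=> Hw; have [H|H] := leqP n./2 (\dim P1); first exact: (Hw P1 P2).
  apply: (Hw P2 P1) => //; first by rewrite addvC.
  have e5 := dimv_sum_cap P1 P2; rewrite sumP dimvf_vec in e5.
  have := dimv_le (P1 :&: P2); lia.
have [Z ZP dZ] := sub_dim d1h.
set W := (P2 :\: P1)%VS.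
have WP2 : (W <= P2)%VS := diffvSl P2 P1.
have WP1 : (W :&: P1 = 0)%VS := capv_diff P2 P1.
have dW : \dim W = (n - \dim P1)%N.
  have e5 := dimv_sum_cap P1 P2; rewrite sumP dimvf_vec in e5.
  have := dimv_cap_compl P2 P1; rewrite capvC -/W; lia.
have inW0 w : w \in W -> w \in P1 -> w = 0.
  by move=> wW wP; apply/eqP; rewrite -memv0 -WP1; apply/memv_capP.
set Ws := [set w | (w \in W) && (w != 0)].
have cWs : #|Ws| = (2 ^ \dim W - 1)%N.
  rewrite -(@card_nz n Ws W W) //; last by rewrite inE eqxx andbF.
    apply: eq_card => x; rewrite !inE; apply/idP/idP => [H|/andP [H _] //].
    by apply/andP; split => //; case/andP: H => H _; exact: H.
  by move=> b bW bn0; rewrite inE bW bn0.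
set Bout := [set b in B | b \notin P1].
pose Sw w := [set x in B | x - w \in Z].
have key : (\sum_(w in Ws) #|Sw w| <= #|Bout|)%N.
  rewrite -sum1_card.
  rewrite (eq_bigr (fun w => \sum_(x in Bout) ((x \in Sw w) : nat))%N); last first.
    move=> w wWs; rewrite (sum_ind Bout (fun x => x \in Sw w)).
    apply: eq_card => x; rewrite !inE /=.
    case xB: (x \in B) => //=; case xw: (x - w \in Z); rewrite ?andbF ?andbT //=.
    symmetry; apply/negP => xP; move: wWs; rewrite inE => /andP [wW /eqP]; apply.
    apply: inW0 => //; rewrite -[w]opprK -[- w](addKr x) opprD opprK.
    by apply: memvB => //; apply: (subvP ZP).
  rewrite exchange_big /=; apply: leq_sum => x xB.
  rewrite (sum_ind Ws (fun w => x \in Sw w)).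
  apply/card_le1_eqP => w1 w2; rewrite !inE /=.
  move=> /andP [/andP [w1W _] H1] /andP [/andP [w2W _] H2].
  have {H1}H1 : x \in Sw w1 := H1; have {H2}H2 : x \in Sw w2 := H2.
  move: H1 H2; rewrite !inE => /andP [_ H1] /andP [_ H2].
  apply/eqP; rewrite -subr_eq0; apply/eqP; apply: inW0.
    by apply: memvB.
  have -> : w2 - w1 = (x - w1) - (x - w2) by apply: esym; rewrite opprB addrC addrA subrK.
  by apply: (subvP ZP); apply: memvB.
have each : forall w, w \in Ws -> (2 <= #|Sw w|)%N.
  move=> w; rewrite inE => /andP [wW wn0].
  apply: (@coset2 n B P1 Z w) => //.
    by apply: HP2 => //; apply: (subvP WP2).
  apply/negP => wZ; move/eqP: wn0; apply; apply: inW0 => //.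
  exact: (subvP ZP).
have low : (2 * #|Ws| <= #|Bout|)%N.
  apply: leq_trans key; rewrite mulnC -sum_nat_const; apply: leq_sum => w; exact: each.
have cB : #|B| = (#|[set b in B | b \in P1]| + #|Bout|)%N.
  rewrite -(cardID [pred x | x \in P1] B); congr (_ + _); apply: eq_card => x; rewrite !inE /=.
    by case: (x \in B); rewrite ?andbF //= unfold_in.
  by rewrite andbC.
rewrite (@card_nz n B P1 P1) // in cB.
rewrite cWs dW in low.
rewrite cB.
move: low d1h (dimv_le P1); set d := \dim P1; set h := n./2 => low d1h dn.
have X0 : (1 <= 2 ^ h)%N by rewrite expn_gt0.
have Y0 : (1 <= 2 ^ d)%N by rewrite expn_gt0.
have Z0 : (1 <= 2 ^ (n - d))%N by rewrite expn_gt0.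
have [dh2|dh2] := leqP (h.+2) d.
  have : (2 ^ h.+2 <= 2 ^ d)%N by rewrite leq_exp2l.
  rewrite !expnS; lia.
have [E|E] : d = h \/ d = h.+1 by lia.
  rewrite E in low; have E2 : (n - h = h)%N by lia.
  rewrite E2 in low; rewrite E; lia.
have E2 : (n - d = h.-1)%N by lia.
rewrite E2 in low; rewrite E expnS.
have : (2 ^ h = 2 * 2 ^ h.-1)%N by rewrite -expnS prednK.
lia.
Qed.

Definition Qf n (A : 'M['F_2]_n) (x : 'rV['F_2]_n) : 'F_2 :=
  \sum_(i < n) \sum_(j < n) A i j * x 0 i * x 0 j.

Lemma Q_add n (A : 'M['F_2]_n) x e :
  Qf A (x + e) = Qf A x + Qf A e + dot x (e *m (A + A^T)^T).
Proof.
have -> : dot x (e *m (A + A^T)^T) = \sum_(i < n) \sum_(j < n) A i j * x 0 i * e 0 j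
                 + \sum_(i < n) \sum_(j < n) A i j * e 0 i * x 0 j.
  rewrite /dot [X in _ = _ + X]exchange_big -big_split /=; apply: eq_bigr => i _.
  rewrite -big_split mxE big_distrr /=; apply: eq_bigr => j _.
  rewrite !mxE; ring.
rewrite /Qf -!big_split /=; apply: eq_bigr => i _.
rewrite -!big_split /=; apply: eq_bigr => j _.
rewrite !mxE; ring.
Qed.

Lemma f_add n (f : 'rV['F_2]_n -> 'F_2) A c d
  (Hf : forall x, f x = Qf A x + dot c x + d) x e :
  f (x + e) = f x + f e + f 0 + dot x (e *m (A + A^T)^T).
Proof.
have Q0 : Qf A 0 = 0.
  by rewrite /Qf big1 // => i _; rewrite big1 // => j _; rewrite !mxE mulr0.
rewrite !Hf Q_add dotDr Q0 dot0r !add0r -[LHS]addr0 -(F2xx d); ring.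
Qed.

Lemma F2_id (p q r s t u : 'F_2) :
  (p + q) + (p + r + s + t + (q + u)) = t + (u + r + s).
Proof.
have -> : (p + q) + (p + r + s + t + (q + u)) = t + (u + r + s) + (p + p) + (q + q) by ring.
by rewrite !F2xx !addr0.
Qed.

Definition Rv n (A : 'M['F_2]_n) : {vspace 'rV['F_2]_n} :=
  lker (linfun (mulmxr (A + A^T)^T)).

Lemma memRv n (A : 'M['F_2]_n) e : (e \in Rv A) = (e *m (A + A^T)^T == 0).
Proof. by rewrite memv_ker lfunE. Qed.

Lemma walsh_sq n (f : 'rV['F_2]_n -> 'F_2) A c d
  (Hf : forall x, f x = Qf A x + dot c x + d) a :
  walsh f a ^+ 2 = (2 ^ n)%:Z * \sum_(e in Rv A) sg (dot e a + f e + f 0).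
Proof.
rewrite expr2 {1}/walsh mulr_suml.
have E x e : sg (f x + dot x a) * sg (f (x + e) + dot (x + e) a) =
    sg (dot x (e *m (A + A^T)^T)) * sg (dot e a + f e + f 0).
  by rewrite -!sgD; congr sg; rewrite (f_add Hf) dotDl F2_id.
under eq_bigr => x _ do rewrite /walsh mulr_sumr (reindex_inj (addrI x)) /=.
under eq_bigr => x _ do under eq_bigr => e _ do rewrite E.
rewrite exchange_big /= mulr_sumr [RHS]big_mkcond /=; apply: eq_bigr => e _.
rewrite -mulr_suml sum_dot memRv; case: eqP => _ //.
by rewrite mul0r.
Qed.

Lemma quad_walsh n (f : 'rV['F_2]_n -> 'F_2) :
  ~~ odd n -> quadratic_fun f -> ~~ bent f ->
  forall a, (2 ^ (n./2).+1 %| `|walsh f a|)%N.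
Proof.
move=> ev [A [c [d Hf]]] nb a.
have hn := even_half ev.
pose g a' e := dot e a' + f e + f 0.
have gadd a' : {in Rv A &, forall x y, g a' (x + y) = g a' x + g a' y}.
  move=> x y _ yR; move: yR; rewrite memRv => /eqP yC.
  rewrite /g (f_add Hf) yC dot0r dotDl addr0; ring.
have Wsq a' : walsh f a' ^+ 2 = (2 ^ n)%:Z *
    (if [forall x, (x \in Rv A) ==> (g a' x == 0)] then (2 ^ \dim (Rv A))%:Z else 0).
  by rewrite (walsh_sq Hf) (char_sum (h := g a')) // cardU.
have [r0|rpos] := posnP (\dim (Rv A)).
  exfalso; apply: (negP nb); apply/forallP => a'.
  have R0 : Rv A = 0%VS by apply/eqP; rewrite -dimv_eq0 r0.
  have HW : walsh f a' ^+ 2 = (2 ^ n)%:Z.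
    rewrite Wsq r0 ifT ?mulr1 //; apply/forallP => x; apply/implyP.
    by rewrite R0 memv0 => /eqP ->; rewrite /g dot0l add0r F2xx.
  have := congr1 absz HW; rewrite abszX /= => Hw.
  rewrite -abszE eqz_nat -(@eqn_exp2r _ _ 2) // Hw -expnM mulnC.
  by rewrite mul2n -addnn -hn.
have := Wsq a; case: ifP => _; last first.
  by rewrite mulr0 => /eqP; rewrite sqrf_eq0 => /eqP ->.
rewrite -PoszM -expnD => /(congr1 absz); rewrite abszX /= => Hw.
have : (`|walsh f a| %| 2 ^ (n + \dim (Rv A)))%N by rewrite -Hw expnS dvdn_mulr.
case/dvdn_pfactor => // k _ Ek.
rewrite Ek -expnM in Hw; move/eqP: Hw; rewrite eqn_exp2l // => /eqP Hk.
rewrite Ek dvdn_exp2l //; lia.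
Qed.

Lemma walshE n (f : 'rV['F_2]_n -> 'F_2) a : walsh f a = \sum_x sg (f x + dot x a).
Proof. by []. Qed.

Lemma zero_not_bent n (F : 'rV['F_2]_n -> 'rV['F_2]_n) :
  (0 < n)%N -> ~~ bent (comp_fun F 0).
Proof.
move=> n0; apply/negP => /forallP /(_ 0).
rewrite /walsh /comp_fun.
under eq_bigr => x _ do rewrite dot0l add0r.
rewrite sum_dot eqxx -abszE eqz_nat eqn_exp2l //.
move=> /eqP E; have : (n./2 < n)%N by rewrite -divn2 ltn_Pdiv.
by rewrite -E ltnn.
Qed.

Lemma parity n (F : 'rV['F_2]_n -> 'rV['F_2]_n) :
  ~~ odd n -> (0 < n)%N -> quadratic F ->
  forall U : {vspace 'rV['F_2]_n}, \dim U = (n./2 + 1)%N ->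
  odd #|[set b in NF F | b \in U]|.
Proof.
move=> ev n0 qF U dU.
have hn := even_half ev.
set h := n./2 in hn dU *.
have dvdS : ((2 ^ (h + 1))%:Z %| \sum_(b in U) walsh (comp_fun F b) 0)%Z.
  under eq_bigr => b _ do rewrite walshE.
  rewrite /comp_fun exchange_big /=; apply: rpred_sum => x _.
  under eq_bigr => b _ do rewrite dot0r addr0.
  rewrite (char_sum (h := fun b => dot b (F x))); last by move=> ? ? _ _; rewrite dotDl.
  by case: ifP => _; rewrite ?rpred0 // cardU dU dvdzz.
pose bU := [set b in U | bent (comp_fun F b)].
have dvdT : ((2 ^ (h + 1))%:Z %| \sum_(b in U) (walsh (comp_fun F b) 0 -
               (if bent (comp_fun F b) then (2 ^ h)%:Z else 0)))%Z.
  apply: rpred_sum => b _; case: ifP => Hb; last first.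
    by rewrite subr0 dvdzE /= addn1; apply: quad_walsh => //; rewrite Hb.
  move/forallP: Hb => /(_ 0); rewrite eqr_norml => /andP [/orP [] /eqP -> _].
    by rewrite subrr rpred0.
  by rewrite -opprD rpredN -PoszD dvdzE /= addn1 expnS mul2n addnn.
rewrite sumrB in dvdT.
have E2 : \sum_(b in U) (if bent (comp_fun F b) then (2 ^ h)%:Z else 0) = (2 ^ h * #|bU|)%N%:Z.
  rewrite -big_mkcondr /= sumr_const -mulr_natr natz -PoszM; congr (Posz (_ * _)).
  by apply: eq_card => b; rewrite !inE.
rewrite E2 in dvdT.
have := rpredB dvdS dvdT; rewrite opprB addrC subrK dvdzE /= addn1 expnS mulnC.
rewrite dvdn_pmul2l ?expn_gt0 // dvdn2 => ebU.
pose NFU := [set b in NF F | b \in U].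
have cI := cardID [pred b | bent (comp_fun F b)] U.
have E3 : #|[predI U & [pred b | bent (comp_fun F b)]]| = #|bU|.
  by apply: eq_card => b; rewrite !inE.
have E4 : #|[predD U & [pred b | bent (comp_fun F b)]]| = #|0 |: NFU|.
  apply: eq_card => b; rewrite !inE.
  have [->|bn0] := eqVneq b 0; first by rewrite mem0v (zero_not_bent F n0).
  by rewrite andbC.
rewrite E3 E4 cardsU1 cardU dU !inE eqxx /= in cI.
move: (congr1 odd cI); rewrite oddX addn1 /= !oddD (negbTE ebU) /=.
by case: (odd #|NFU|).
Qed.

Theorem mainTheorem20 (n : nat) (F : 'rV['F_2]_n -> 'rV['F_2]_n) :
  ~~ odd n ->
  quadratic F ->
  (exists G : 'rV['F_2]_n -> 'rV['F_2]_n, bijective G /\ CCZ_equiv F G) ->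
  (3 * (2 ^ n./2 - 1) <= #|NF F|)%N /\
  (forall U : {vspace 'rV['F_2]_n}, \dim U = (n./2 + 1)%N ->
     (3 <= #|[set b in NF F | b \in U]|)%N).
Proof.
move=> ev qF HG.
have [P1 [P2 [sumP [HP1 HP2]]]] := ccz_P HG.
have B0 : 0 \notin NF F by rewrite inE eqxx.
have [n0|npos] := posnP n.
  split; first by rewrite (_ : n./2 = 0%N) ?n0.

  by move=> U dU; have := dimv_le U; rewrite dU => H; exfalso; move: H; rewrite n0.
have Hpar := parity ev npos qF.
split; first exact: (size_bound ev sumP HP1 HP2 B0 Hpar).
by move=> U dU; apply: (block3 ev sumP HP1 HP2 dU (Hpar U dU)).
Qed.
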